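(* Let $n \ge 2$ be even. Then for every $N$ with $1 \le N \le \frac{3n}{2}$, there exists a finite sequence of $n$-crossing permutations over $S_{3n/2}$ whose product sends $1$ to $N$.
   Context: For integers $2\le n\le m$ and $1 \le j \le m-n+1$, the $n$-crossing permutation $\pi_j\in S_m$ is $\pi_j=(j,\,j+n-1)(j+1,\,j+n-2)\cdots$, i.e. the involution sending $i \mapsto 2j+n-1-i$ for $j\le i\le j+n-1$ and fixing all other elements of $\{1,\dots,m\}$. The $n$-crossing permutations over $S_m$ are $\pi_1,\dots,\pi_{m-n+1}$. *)

(* Defs.v *)
From mathcomp Require Import all_boot.
Set Implicit Arguments. Unset Strict Implicit. Unset Printing Implicit Defensive.

(* For 1 <= j <= m-n+1 it maps {1..m} onto itself and
   agrees with pi_j in S_m there. *)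
Definition crossing (n j : nat) (i : nat) : nat :=
  if (j <= i) && (i <= j + n - 1) then (2 * j + n - 1) - i else i.

Definition crossing_prod (n : nat) (s : seq nat) : nat -> nat :=
  foldr (fun j f => crossing n j \o f) id s.

Definition crossing_index (m n j : nat) : bool := (1 <= j) && (j <= m - n + 1).

(* Main.v *)
Require Import Defs.
From mathcomp Require Import all_boot.
From mathcomp Require Import zify.

Lemma crossing_in n j i : j <= i -> i <= j + n - 1 -> crossing n j i = 2 * j + n - 1 - i.
Proof. by move=> h1 h2; rewrite /crossing h1 h2. Qed.

Lemma small k x : 1 <= k -> 1 <= x <= 2 * k + 1 ->
  exists s : seq nat, all (crossing_index (3 * k) (2 * k)) s /\ crossing_prod (2 * k) s 1 = x.
Proof.
move=> hk /andP[h1 h2].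
have hx := odd_double_half x.
case ho: (odd x) hx => /= hx.
- exists [:: x./2 + 1; 1]; split.
    rewrite /= /crossing_index; apply/and3P; split => //; lia.
  rewrite /crossing_prod /= (@crossing_in _ 1 1); try lia.
  rewrite crossing_in; lia.
- exists [:: x./2 + 1; k + 1; 1]; split.
    rewrite /= /crossing_index; apply/and4P; split => //; lia.
  rewrite /crossing_prod /= (@crossing_in _ 1 1); try lia.
  rewrite (@crossing_in _ (k+1)); try lia.
  rewrite crossing_in; lia.
Qed.

Theorem lemma2p3 (n : nat) (hn : 2 <= n) (hev : ~~ odd n) (N : nat)
  (hN : 1 <= N <= 3 * n./2) :
  exists s : seq nat, all (crossing_index (3 * n./2) n) s /\ crossing_prod n s 1 = N.
Proof.
have hn2 := odd_double_half n.
rewrite (negbTE hev) /= in hn2.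
have [k hk2] : exists k, n = 2 * k by exists n./2; lia.
subst n.
have e : (2 * k)./2 = k by rewrite mul2n doubleK.
rewrite e in hN *.
have hk : 1 <= k by lia.
case: (leqP N (2 * k + 1)) => hN2.
  by apply: small => //; lia.
have [s [hs1 hs2]] := @small k (4 * k + 1 - N) hk ltac:(lia).
exists ((k + 1) :: s); split.
  by rewrite /= hs1 andbT /crossing_index; lia.
rewrite /crossing_prod /= -/(crossing_prod _ _) hs2 crossing_in; lia.
Qed.
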